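(* Let $X$ be an infinite-dimensional complex Banach space, and let $(S(z))_{z\in\mathbb{C}}$ be an entire $C$-regularized group on $X$ with $C$ of dense range. Let $x\in X$ be a supercyclic vector for $\{S(z):z\in\mathbb{C}\}$. Then: (1) $S(z)x\neq0$ for all $z\in\mathbb{C}$; (2) for every $\omega_0\in\mathbb{C}$, the set $\{\alpha S(z)x:\alpha,z\in\mathbb{C},\ |z|>|\omega_0|\}$ is dense in $X$.
   Context: An entire $C$-regularized group is a family $(S(z))_{z\in\mathbb{C}}$ of bounded operators on $X$ satisfying three conditions: $S(0)=C$; $S(z+w)C=S(z)S(w)$ for all $z,w\in\mathbb{C}$; and $z\mapsto S(z)x$ is entire for every $x\in X$. A vector $x$ is supercyclic for $\{S(z):z\in\mathbb{C}\}$ if $\{\alpha S(z)x:\alpha,z\in\mathbb{C}\}$ is dense in $X$. *)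

(* Defs.v *)
From Stdlib Require Import Reals.
Open Scope R_scope.

Record CC := mkC { Re : R; Im : R }.

Definition C0 : CC := mkC 0 0.
Definition C1 : CC := mkC 1 0.
Definition Cadd (a b : CC) : CC := mkC (Re a + Re b) (Im a + Im b).
Definition Copp (a : CC) : CC := mkC (- Re a) (- Im a).
Definition Cmul (a b : CC) : CC :=
  mkC (Re a * Re b - Im a * Im b) (Re a * Im b + Im a * Re b).
Definition Cinv (a : CC) : CC :=
  mkC (Re a / (Re a ^ 2 + Im a ^ 2)) (- Im a / (Re a ^ 2 + Im a ^ 2)).
Definition Cmod (a : CC) : R := sqrt (Re a ^ 2 + Im a ^ 2).

Record CNormedSpace := {
  carrier :> Type;
  vzero : carrier;
  vadd : carrier -> carrier -> carrier;
  vopp : carrier -> carrier;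
  vscal : CC -> carrier -> carrier;
  vnorm : carrier -> R;
  vadd_assoc : forall x y z, vadd x (vadd y z) = vadd (vadd x y) z;
  vadd_comm : forall x y, vadd x y = vadd y x;
  vadd_0 : forall x, vadd x vzero = x;
  vadd_opp : forall x, vadd x (vopp x) = vzero;
  vscal_1 : forall x, vscal C1 x = x;
  vscal_mul : forall a b x, vscal a (vscal b x) = vscal (Cmul a b) x;
  vscal_addv : forall a x y, vscal a (vadd x y) = vadd (vscal a x) (vscal a y);
  vscal_adds : forall a b x, vscal (Cadd a b) x = vadd (vscal a x) (vscal b x);
  vnorm_eq0 : forall x, vnorm x = 0 -> x = vzero;
  vnorm_scal : forall a x, vnorm (vscal a x) = Cmod a * vnorm x;
  vnorm_triangle : forall x y, vnorm (vadd x y) <= vnorm x + vnorm y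
}.

Arguments vzero {c}.
Arguments vadd {c}.
Arguments vopp {c}.
Arguments vscal {c}.
Arguments vnorm {c}.

Definition vsub {X : CNormedSpace} (x y : X) : X := vadd x (vopp y).

Definition Cauchy_seq {X : CNormedSpace} (u : nat -> X) : Prop :=
  forall eps, eps > 0 -> exists N, forall m n, (N <= m)%nat -> (N <= n)%nat ->
    vnorm (vsub (u m) (u n)) < eps.

Definition seq_converges {X : CNormedSpace} (u : nat -> X) : Prop :=
  exists l : X, forall eps, eps > 0 -> exists N, forall n, (N <= n)%nat ->
    vnorm (vsub (u n) l) < eps.

Definition complete (X : CNormedSpace) : Prop :=
  forall u : nat -> X, Cauchy_seq u -> seq_converges u.

Fixpoint lincomb {X : CNormedSpace} (n : nat) (c : nat -> CC) (v : nat -> X) : X :=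
  match n with
  | O => vzero
  | S k => vadd (lincomb k c v) (vscal (c k) (v k))
  end.

Definition infinite_dimensional (X : CNormedSpace) : Prop :=
  forall (n : nat) (v : nat -> X), exists x : X,
    ~ exists c : nat -> CC, x = lincomb n c v.

Definition bounded_operator {X : CNormedSpace} (T : X -> X) : Prop :=
  (forall x y, T (vadd x y) = vadd (T x) (T y)) /\
  (forall a x, T (vscal a x) = vscal a (T x)) /\
  (exists M : R, forall x, vnorm (T x) <= M * vnorm x).

Definition dense {X : CNormedSpace} (A : X -> Prop) : Prop :=
  forall (y : X) (eps : R), eps > 0 -> exists a, A a /\ vnorm (vsub a y) < eps.

Definition entire {X : CNormedSpace} (f : CC -> X) : Prop :=
  forall z0 : CC, exists L : X, forall eps, eps > 0 -> exists delta, delta > 0 /\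
    forall h : CC, 0 < Cmod h < delta ->
      vnorm (vsub (vscal (Cinv h) (vsub (f (Cadd z0 h)) (f z0))) L) < eps.

Definition entire_C_regularized_group {X : CNormedSpace}
    (Cop : X -> X) (S : CC -> X -> X) : Prop :=
  bounded_operator Cop /\
  (forall z, bounded_operator (S z)) /\
  (forall x, S C0 x = Cop x) /\
  (forall z w x, S (Cadd z w) (Cop x) = S z (S w x)) /\
  (forall x, entire (fun z => S z x)).

Definition supercyclic {X : CNormedSpace} (S : CC -> X -> X) (x : X) : Prop :=
  dense (fun y => exists alpha z, y = vscal alpha (S z x)).

Definition dense_range {X : CNormedSpace} (T : X -> X) : Prop :=
  dense (fun y => exists x, y = T x).

(* Main.v *)
Require Import Defs.
From Stdlib Require Import Reals Lra Lia Psatz Classical ClassicalEpsilon.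
Import Defs.
Open Scope R_scope.

Lemma CC_eq a b : Re a = Re b -> Im a = Im b -> a = b.
Proof. destruct a, b; simpl; intros; subst; reflexivity. Qed.

Lemma Cmod_ge0 a : 0 <= Cmod a.
Proof. unfold Cmod; apply sqrt_pos. Qed.

Lemma Cmod_mul a b : Cmod (Cmul a b) = Cmod a * Cmod b.
Proof.
  destruct a as [a1 a2], b as [b1 b2]; unfold Cmod, Cmul; simpl.
  rewrite <- sqrt_mult by nra. f_equal. ring.
Qed.

Lemma Cmod_opp a : Cmod (Copp a) = Cmod a.
Proof. destruct a; unfold Cmod, Copp; simpl; f_equal; ring. Qed.

Lemma Cmod_C0 : Cmod C0 = 0.
Proof. unfold Cmod, C0; simpl. transitivity (sqrt 0); [f_equal; ring | apply sqrt_0]. Qed.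

Lemma Cmod_C1 : Cmod C1 = 1.
Proof. unfold Cmod, C1; simpl. transitivity (sqrt 1); [f_equal; ring | apply sqrt_1]. Qed.

Lemma Cmod_real r : Cmod (mkC r 0) = Rabs r.
Proof.
  unfold Cmod; simpl. rewrite <- sqrt_Rsqr_abs. f_equal. unfold Rsqr; ring.
Qed.

Lemma Re_le_Cmod a : Rabs (Re a) <= Cmod a.
Proof.
  unfold Cmod. rewrite <- sqrt_Rsqr_abs. apply sqrt_le_1_alt. unfold Rsqr. nra.
Qed.

Lemma Im_le_Cmod a : Rabs (Im a) <= Cmod a.
Proof.
  unfold Cmod. rewrite <- sqrt_Rsqr_abs. apply sqrt_le_1_alt. unfold Rsqr. nra.
Qed.

Lemma Cmod_le_sum a : Cmod a <= Rabs (Re a) + Rabs (Im a).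
Proof.
  unfold Cmod.
  assert (H: Rabs (Re a) + Rabs (Im a) = sqrt (Rsqr (Rabs (Re a) + Rabs (Im a)))).
  { rewrite sqrt_Rsqr; [reflexivity|]. pose proof (Rabs_pos (Re a)); pose proof (Rabs_pos (Im a)); lra. }
  rewrite H. apply sqrt_le_1_alt. unfold Rsqr.
  pose proof (Rabs_pos (Re a)); pose proof (Rabs_pos (Im a)).
  assert (Re a ^ 2 = Rabs (Re a) * Rabs (Re a)).
  { rewrite <- Rabs_mult. rewrite Rabs_right; [ring|]. nra. }
  assert (Im a ^ 2 = Rabs (Im a) * Rabs (Im a)).
  { rewrite <- Rabs_mult. rewrite Rabs_right; [ring|]. nra. }
  nra.
Qed.

Lemma Cmod_eq0 a : Cmod a = 0 -> a = C0.
Proof.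
  unfold Cmod; intro H. apply sqrt_eq_0 in H; [|nra].
  apply CC_eq; simpl; nra.
Qed.

Lemma Cmod_pos a : a <> C0 -> 0 < Cmod a.
Proof.
  intro H. destruct (Cmod_ge0 a) as [h|h]; auto. exfalso; apply H, Cmod_eq0; auto.
Qed.

Lemma Cnz_sq a : a <> C0 -> Re a ^ 2 + Im a ^ 2 <> 0.
Proof.
  intros H E. apply H. apply CC_eq; simpl; nra.
Qed.

Lemma Cmul_inv a : a <> C0 -> Cmul a (Cinv a) = C1.
Proof.
  intro H. pose proof (Cnz_sq a H). destruct a as [x y]; simpl in *.
  apply CC_eq; unfold Cmul, Cinv; simpl. all: field; auto; intro E; apply H0; lra.
Qed.

Lemma Cmul_opp_inv a b : a <> C0 -> Cmul a (Cmul (Copp (Cinv a)) b) = Copp b.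
Proof.
  intro H. pose proof (Cnz_sq a H). destruct a as [x y], b; simpl in *.
  apply CC_eq; unfold Cmul, Cinv, Copp; simpl. all: field; auto; intro E; apply H0; lra.
Qed.
Section Vec.
Context {X : CNormedSpace}.
Implicit Types (x y z f h : X).

Lemma vadd_0l (x : X) : vadd vzero x = x.
Proof. rewrite vadd_comm; apply vadd_0. Qed.

Lemma vadd_cancel_r (a : X) (b : X) (c : X) : vadd a c = vadd b c -> a = b.
Proof.
  intro H. rewrite <- (vadd_0 _ a), <- (vadd_0 _ b), <- (vadd_opp _ c), !vadd_assoc, H. reflexivity.
Qed.

Lemma vadd_cancel_l (a : X) (b : X) (c : X) : vadd c a = vadd c b -> a = b.
Proof. rewrite (vadd_comm _ c a), (vadd_comm _ c b). apply vadd_cancel_r. Qed.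

Lemma vscal_0 (x : X) : vscal C0 x = vzero.
Proof.
  apply (vadd_cancel_l _ _ (vscal C0 x)). rewrite vadd_0, <- vscal_adds.
  f_equal. apply CC_eq; simpl; ring.
Qed.

Lemma vopp_scal (x : X) : vopp x = vscal (Copp C1) x.
Proof.
  apply (vadd_cancel_l _ _ x). rewrite vadd_opp.
  rewrite <- (vscal_1 _ x) at 1. rewrite <- vscal_adds.
  rewrite <- (vscal_0 x). f_equal. apply CC_eq; simpl; ring.
Qed.

Lemma vscal_v0 a : vscal a (@vzero X) = vzero.
Proof.
  transitivity (vscal a (vscal C0 (@vzero X))); [rewrite vscal_0; reflexivity|].
  rewrite vscal_mul. replace (Cmul a C0) with C0 by (apply CC_eq; simpl; ring). apply vscal_0.
Qed.

Lemma vnorm_0 : vnorm (@vzero X) = 0.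
Proof. rewrite <- (vscal_0 vzero), vnorm_scal, Cmod_C0. ring. Qed.

Lemma vnorm_opp (x : X) : vnorm (vopp x) = vnorm x.
Proof. rewrite vopp_scal, vnorm_scal, Cmod_opp, Cmod_C1. ring. Qed.

Lemma vnorm_ge0 (x : X) : 0 <= vnorm x.
Proof.
  pose proof (vnorm_triangle _ x (vopp x)). rewrite vadd_opp, vnorm_0, vnorm_opp in H. lra.
Qed.

Lemma vopp_add (a : X) (b : X) : vopp (vadd a b) = vadd (vopp a) (vopp b).
Proof. rewrite !vopp_scal. apply vscal_addv. Qed.

Lemma vopp_opp (a : X) : vopp (vopp a) = a.
Proof.
  rewrite !vopp_scal, vscal_mul. rewrite <- (vscal_1 _ a) at 2. f_equal.
  apply CC_eq; simpl; ring.
Qed.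

Lemma vscal_opp (a : CC) (x : X) : vscal a (vopp x) = vopp (vscal a x).
Proof.
  rewrite !vopp_scal, !vscal_mul. f_equal. apply CC_eq; simpl; ring.
Qed.

Lemma vscal_oppC (a : CC) (x : X) : vscal (Copp a) x = vopp (vscal a x).
Proof.
  rewrite !vopp_scal, !vscal_mul. f_equal. apply CC_eq; simpl; ring.
Qed.

Lemma vadd_swap (a : X) (b : X) (c : X) : vadd a (vadd b c) = vadd b (vadd a c).
Proof. rewrite !vadd_assoc, (vadd_comm _ a b). reflexivity. Qed.

Lemma vsub_split (a : X) (b : X) (c : X) : vsub a c = vadd (vsub a b) (vsub b c).
Proof.
  unfold vsub. rewrite <- vadd_assoc. f_equal. rewrite vadd_assoc, (vadd_comm _ (vopp b) b), vadd_opp, vadd_0l.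
  reflexivity.
Qed.

Lemma vsub_sym (a : X) (b : X) : vsub b a = vopp (vsub a b).
Proof. unfold vsub. rewrite vopp_add, vopp_opp, vadd_comm. reflexivity. Qed.

Lemma vnorm_sub_sym (a : X) (b : X) : vnorm (vsub a b) = vnorm (vsub b a).
Proof. rewrite (vsub_sym b a), vnorm_opp. reflexivity. Qed.

Lemma vnorm_sub_tri (a : X) (b : X) (c : X) : vnorm (vsub a c) <= vnorm (vsub a b) + vnorm (vsub b c).
Proof. rewrite (vsub_split a b c). apply vnorm_triangle. Qed.

Lemma vsub_0 (a : X) : vsub a vzero = a.
Proof. unfold vsub. rewrite <- (vscal_0 vzero), <- vscal_oppC, vscal_v0, vadd_0. reflexivity. Qed.

Lemma vsub_diag (a : X) : vsub a a = vzero.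
Proof. apply vadd_opp. Qed.

Lemma vadd_sub (a : X) (b : X) : vadd b (vsub a b) = a.
Proof. unfold vsub. rewrite vadd_swap, vadd_opp, vadd_0. reflexivity. Qed.

Lemma vsub_eq0 (a : X) (b : X) : vsub a b = vzero -> a = b.
Proof. intro H. rewrite <- (vadd_sub a b), H, vadd_0. reflexivity. Qed.

Lemma vsub_add_l (y : X) (a : X) (b : X) : vsub (vadd y a) (vadd y b) = vsub a b.
Proof.
  unfold vsub. rewrite vopp_add, <- vadd_assoc, vadd_swap, (vadd_assoc _ y), vadd_opp, vadd_0l. reflexivity.
Qed.

Lemma vsub_add_r0 (y : X) (a : X) : vsub (vadd y a) y = a.
Proof.
  unfold vsub. rewrite (vadd_comm _ y a), <- vadd_assoc, vadd_opp, vadd_0. reflexivity.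
Qed.

Lemma vscal_sub (a : CC) (x : X) (y : X) : vscal a (vsub x y) = vsub (vscal a x) (vscal a y).
Proof. unfold vsub. rewrite vscal_addv, vscal_opp. reflexivity. Qed.

Lemma vscal_subs (a b : CC) (x : X) : vscal (Cadd a (Copp b)) x = vsub (vscal a x) (vscal b x).
Proof. unfold vsub. rewrite vscal_adds, vscal_oppC. reflexivity. Qed.

Lemma vsub_sub (x : X) (f : X) (h : X) : vsub (vsub x f) h = vsub x (vadd f h).
Proof. unfold vsub. rewrite vopp_add, vadd_assoc. reflexivity. Qed.

Lemma vnorm_le_sub (a : X) (b : X) : vnorm a <= vnorm b + vnorm (vsub a b).
Proof. rewrite <- (vadd_sub a b) at 1. apply vnorm_triangle. Qed.

End Vec.
Section Ops.
Context {X : CNormedSpace}.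

Lemma vadd_ACA (a b c d : X) : vadd (vadd a b) (vadd c d) = vadd (vadd a c) (vadd b d).
Proof. rewrite <- !vadd_assoc. f_equal. apply vadd_swap. Qed.

Lemma op_0 (T : X -> X) : bounded_operator T -> T vzero = vzero.
Proof.
  intros [_ [HS _]]. transitivity (T (vscal C0 (@vzero X))); [rewrite vscal_0; reflexivity|]. rewrite HS. apply vscal_0.
Qed.

Lemma op_sub (T : X -> X) a b : bounded_operator T -> T (vsub a b) = vsub (T a) (T b).
Proof.
  intros [HA [HS _]]. unfold vsub. rewrite HA, !vopp_scal, HS. reflexivity.
Qed.

Lemma op_lip (T : X -> X) : bounded_operator T ->
  exists K, K > 0 /\ forall a b, vnorm (vsub (T a) (T b)) <= K * vnorm (vsub a b).
Proof.
  intro HT. pose proof HT as [_ [_ [M HM]]]. exists (Rabs M + 1). split.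
  { pose proof (Rabs_pos M); lra. }
  intros a b. rewrite <- op_sub by auto. eapply Rle_trans; [apply HM|].
  apply Rmult_le_compat_r; [apply vnorm_ge0|]. pose proof (Rle_abs M); lra.
Qed.

Lemma lincomb_ext n (c d : nat -> CC) (v : nat -> X) :
  (forall i, (i < n)%nat -> c i = d i) -> lincomb n c v = lincomb n d v.
Proof.
  induction n; intro H; simpl; [reflexivity|].
  rewrite IHn by (intros; apply H; lia). rewrite H by lia. reflexivity.
Qed.

Lemma lincomb_add n (c d : nat -> CC) (v : nat -> X) :
  lincomb n (fun i => Cadd (c i) (d i)) v = vadd (lincomb n c v) (lincomb n d v).
Proof.
  induction n; simpl. { rewrite vadd_0; reflexivity. }
  rewrite IHn, vscal_adds. apply vadd_ACA.
Qed.

Lemma lincomb_scal a n (c : nat -> CC) (v : nat -> X) :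
  vscal a (lincomb n c v) = lincomb n (fun i => Cmul a (c i)) v.
Proof.
  induction n; simpl. { apply vscal_v0. }
  rewrite vscal_addv, IHn, vscal_mul. reflexivity.
Qed.

Lemma lincomb_opp n (c : nat -> CC) (v : nat -> X) :
  vopp (lincomb n c v) = lincomb n (fun i => Copp (c i)) v.
Proof.
  rewrite vopp_scal, lincomb_scal. apply lincomb_ext. intros.
  apply CC_eq; simpl; ring.
Qed.

Lemma lincomb_zero n (c : nat -> CC) (v : nat -> X) :
  (forall i, (i < n)%nat -> c i = C0) -> lincomb n c v = vzero.
Proof.
  induction n; intro H; simpl; [reflexivity|].
  rewrite IHn by (intros; apply H; lia). rewrite H by lia. rewrite vscal_0. apply vadd_0.
Qed.

Lemma lincomb_delta j n (v : nat -> X) : (j < n)%nat ->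
  lincomb n (fun i => if Nat.eqb i j then C1 else C0) v = v j.
Proof.
  induction n; intro H; [lia|]. simpl.
  destruct (Nat.eq_dec j n) as [->|Hne].
  - rewrite Nat.eqb_refl, lincomb_zero, vadd_0l, vscal_1; [reflexivity|].
    intros i Hi. destruct (Nat.eqb_spec i n); [lia|reflexivity].
  - rewrite IHn by lia. destruct (Nat.eqb_spec n j); [lia|]. rewrite vscal_0, vadd_0. reflexivity.
Qed.

Lemma cont_of_entire (f : CC -> X) : entire f -> forall z0 eta, eta > 0 ->
  exists rho, rho > 0 /\ forall h, Cmod h < rho -> vnorm (vsub (f (Cadd z0 h)) (f z0)) < eta.
Proof.
  intros Hf z0 eta Heta. destruct (Hf z0) as [L HL].
  destruct (HL 1 ltac:(lra)) as [del [Hdel Hd]].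
  pose proof (vnorm_ge0 L) as HL0.
  exists (Rmin del (eta / (vnorm L + 2))). split.
  { apply Rmin_pos; auto. apply Rdiv_lt_0_compat; lra. }
  intros h Hh.
  destruct (classic (h = C0)) as [->|Hnz].
  - replace (Cadd z0 C0) with z0 by (destruct z0; apply CC_eq; simpl; ring).
    rewrite vsub_diag, vnorm_0. auto.
  - pose proof (Cmod_pos h Hnz) as Hp.
    assert (Hm1 : Cmod h < del) by (eapply Rlt_le_trans; [apply Hh| apply Rmin_l]).
    assert (Hm2 : Cmod h < eta / (vnorm L + 2)) by (eapply Rlt_le_trans; [apply Hh| apply Rmin_r]).
    specialize (Hd h (conj Hp Hm1)).
    set (D := vsub (f (Cadd z0 h)) (f z0)) in *.
    assert (E : D = vscal h (vscal (Cinv h) D)) by (rewrite vscal_mul, Cmul_inv, vscal_1 by auto; reflexivity).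
    pose proof (vnorm_le_sub (vscal (Cinv h) D) L) as T.
    rewrite E, vnorm_scal.
    assert (vnorm (vscal (Cinv h) D) <= vnorm L + 1) by lra.
    apply Rle_lt_trans with (Cmod h * (vnorm L + 1)).
    { apply Rmult_le_compat_l; auto. apply Cmod_ge0. }
    apply Rlt_le_trans with (eta / (vnorm L + 2) * (vnorm L + 2)).
    { apply Rle_lt_trans with (Cmod h * (vnorm L + 2)); [apply Rmult_le_compat_l; lra|].
      apply Rmult_lt_compat_r; lra. }
    right; field; lra.
Qed.

End Ops.
Lemma small_zero {X : CNormedSpace} (y : X) : (forall eta, eta > 0 -> vnorm y < eta) -> y = vzero.
Proof.
  intro H. apply vnorm_eq0. destruct (vnorm_ge0 y) as [h|h]; auto.
  specialize (H _ h). lra.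
Qed.

Lemma vnorm_sub0l {X : CNormedSpace} (b : X) : vnorm (vsub vzero b) = vnorm b.
Proof. rewrite vsub_sym, vnorm_opp, vsub_0. reflexivity. Qed.

Lemma Cadd_C0l z : Cadd C0 z = z.
Proof. destruct z; apply CC_eq; simpl; ring. Qed.

Lemma Cadd_sub_cancel u z : Cadd (Cadd u (Copp z)) z = u.
Proof. destruct u, z; apply CC_eq; simpl; ring. Qed.

Lemma part1 (X : CNormedSpace) (Cop : X -> X) (S : CC -> X -> X) (x : X) :
  infinite_dimensional X ->
  entire_C_regularized_group Cop S ->
  dense_range Cop ->
  supercyclic S x ->
  forall z : CC, S z x <> vzero.
Proof.
  intros Hinf [HCb [HSb [HS0 [HSg _]]]] Hdr Hsc z0 Hz0.
  assert (Ha : forall u, Cop (S u x) = vzero).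
  { intro u. rewrite <- HS0, <- HSg, Cadd_C0l.
    rewrite <- (Cadd_sub_cancel u z0) at 1. rewrite HSg, Hz0. apply op_0; auto. }
  assert (Hb : forall y, Cop y = vzero).
  { intro y. apply small_zero. intros eta Heta.
    destruct (op_lip Cop HCb) as [K [HK HKl]].
    destruct (Hsc y (eta / K) ltac:(apply Rdiv_lt_0_compat; lra)) as [a [[al [u ->]] Ha2]].
    specialize (HKl (vscal al (S u x)) y).
    destruct HCb as [_ [HCs _]]. rewrite HCs, Ha, vscal_v0, vnorm_sub0l in HKl.
    apply Rle_lt_trans with (1 := HKl).
    apply Rlt_le_trans with (K * (eta / K)); [apply Rmult_lt_compat_l; auto|].
    right; field; lra. }
  assert (Hc : forall y : X, y = vzero).
  { intro y. apply small_zero. intros eta Heta.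
    destruct (Hdr y eta Heta) as [a [[w ->] Hw]]. rewrite Hb, vnorm_sub0l in Hw. auto. }
  destruct (Hinf O (fun _ => vzero)) as [x' Hx']. apply Hx'. exists (fun _ => C0).
  simpl. apply Hc.
Qed.
Definition incr (phi : nat -> nat) := forall k, (phi k < phi (S k))%nat.

Lemma incr_lt phi : incr phi -> forall i j, (i < j)%nat -> (phi i < phi j)%nat.
Proof.
  intros H i j Hij. induction Hij. apply H. specialize (H m). lia.
Qed.

Lemma incr_ge phi : incr phi -> forall k, (k <= phi k)%nat.
Proof. intros H k. induction k; [lia|]. specialize (H k). lia. Qed.

Lemma incr_comp f g : incr f -> incr g -> incr (fun k => f (g k)).
Proof. intros Hf Hg k. apply incr_lt; auto. Qed.

Fixpoint build (g : nat -> nat -> nat) (k : nat) : nat :=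
  match k with O => g O O | S k' => g (S (build g k')) (S k') end.

Lemma small_inv eps : eps > 0 -> exists N, forall k, (N <= k)%nat -> / (INR k + 1) < eps.
Proof.
  intro He. destruct (archimed_cor1 eps He) as [N [HN HN0]]. exists N. intros k Hk.
  apply Rle_lt_trans with (/ INR N); auto.
  apply Rinv_le_contravar. apply lt_0_INR; lia.
  apply le_INR in Hk. lra.
Qed.

Lemma BW1 (u : nat -> R) M : (forall n, Rabs (u n) <= M) ->
  exists phi, incr phi /\ exists l, forall eps, eps > 0 -> exists N, forall k, (N <= k)%nat ->
    Rabs (u (phi k) - l) < eps.
Proof.
  intro HM.
  destruct (Bolzano_Weierstrass u (fun c => -M <= c <= M) (compact_P3 (-M) M)) as [l Hl].
  { intro n. specialize (HM n). pose proof (Rle_abs (u n)); pose proof (Rle_abs (- u n)); rewrite Rabs_Ropp in *; split; lra. }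
  assert (H : forall N k, exists p, (N <= p)%nat /\ Rabs (u p - l) < / (INR k + 1)).
  { intros N k.
    assert (Hp : 0 < / (INR k + 1)) by (apply Rinv_0_lt_compat; pose proof (pos_INR k); lra).
    destruct (Hl (disc l (mkposreal _ Hp)) N) as [p [Hp1 Hp2]].
    { exists (mkposreal _ Hp). intros y Hy; exact Hy. }
    exists p; split; auto. }
  set (g := fun N k => proj1_sig (constructive_indefinite_description _ (H N k))).
  assert (Hg : forall N k, (N <= g N k)%nat /\ Rabs (u (g N k) - l) < / (INR k + 1)).
  { intros N k. unfold g. destruct (constructive_indefinite_description _ (H N k)); auto. }
  exists (build g). split.
  { intro k. simpl. destruct (Hg (S (build g k)) (S k)). lia. }
  exists l. intros eps He. destruct (small_inv eps He) as [N HN]. exists N. intros k Hk.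
  apply Rlt_trans with (/ (INR k + 1)); [|auto].
  destruct k; simpl; apply Hg.
Qed.

Lemma BWC (a : nat -> CC) M : (forall n, Cmod (a n) <= M) ->
  exists phi, incr phi /\ exists l, forall eps, eps > 0 -> exists N, forall k, (N <= k)%nat ->
    Cmod (Cadd (a (phi k)) (Copp l)) < eps.
Proof.
  intro HM.
  destruct (BW1 (fun n => Re (a n)) M) as [p1 [Hp1 [l1 Hl1]]].
  { intro n. eapply Rle_trans; [apply Re_le_Cmod|apply HM]. }
  destruct (BW1 (fun n => Im (a (p1 n))) M) as [p2 [Hp2 [l2 Hl2]]].
  { intro n. eapply Rle_trans; [apply Im_le_Cmod|apply HM]. }
  exists (fun k => p1 (p2 k)). split; [apply incr_comp; auto|].
  exists (mkC l1 l2). intros eps He.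
  destruct (Hl1 (eps/2) ltac:(lra)) as [N1 HN1].
  destruct (Hl2 (eps/2) ltac:(lra)) as [N2 HN2].
  exists (max N1 N2). intros k Hk.
  eapply Rle_lt_trans; [apply Cmod_le_sum|]. simpl.
  assert (N1 <= p2 k)%nat by (pose proof (incr_ge p2 Hp2 k); lia).
  specialize (HN1 (p2 k) H). specialize (HN2 k ltac:(lia)).
  unfold Rminus in *. lra.
Qed.
Section Closed.
Context {X : CNormedSpace}.

Lemma lincomb_S_last n (c : nat -> CC) (v : nat -> X) lam :
  lincomb (S n) (fun i => if Nat.ltb i n then c i else lam) v = vadd (lincomb n c v) (vscal lam (v n)).
Proof.
  simpl. rewrite Nat.ltb_irrefl. f_equal. apply lincomb_ext. intros i Hi.
  apply Nat.ltb_lt in Hi. rewrite Hi. reflexivity.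
Qed.

Lemma key_bound n (v : nat -> X) dv : dv > 0 ->
  (forall c, dv <= vnorm (vsub (v n) (lincomb n c v))) ->
  forall c lam, Cmod lam * dv <= vnorm (vadd (lincomb n c v) (vscal lam (v n))).
Proof.
  intros Hdv Hb c lam.
  destruct (classic (lam = C0)) as [->|Hnz].
  { rewrite Cmod_C0, Rmult_0_l. apply vnorm_ge0. }
  set (c' := fun i => Cmul (Copp (Cinv lam)) (c i)).
  assert (E : vadd (lincomb n c v) (vscal lam (v n)) = vscal lam (vsub (v n) (lincomb n c' v))).
  { rewrite vscal_sub, lincomb_scal.
    rewrite (lincomb_ext n (fun i => Cmul lam (c' i)) (fun i => Copp (c i))) by (intros; unfold c'; apply Cmul_opp_inv; auto).
    rewrite <- lincomb_opp. unfold vsub. rewrite vopp_opp, vadd_comm. reflexivity. }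
  rewrite E, vnorm_scal. apply Rmult_le_compat_l; [apply Cmod_ge0|apply Hb].
Qed.

Lemma dist_pos n : forall (v : nat -> X) (x : X), ~ (exists c, x = lincomb n c v) ->
  exists d, d > 0 /\ forall c, d <= vnorm (vsub x (lincomb n c v)).
Proof.
  induction n as [|n IH]; intros v x Hx.
  - simpl. exists (vnorm x). assert (x <> vzero) by (intro E; apply Hx; exists (fun _ => C0); auto).
    split. { destruct (vnorm_ge0 x) as [h|h]; auto. exfalso; apply H, vnorm_eq0; auto. }
    intro; rewrite vsub_0; lra.
  - destruct (classic (exists c0, v n = lincomb n c0 v)) as [[c0 Hc0]|Hv].
    + destruct (IH v x) as [d [Hd Hdb]].
      { intros [c Hc]. apply Hx. exists (fun i => if Nat.ltb i n then c i else C0).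
        rewrite lincomb_S_last, vscal_0, vadd_0. auto. }
      exists d; split; auto. intro c. simpl. rewrite Hc0, lincomb_scal, <- lincomb_add. apply Hdb.
    + destruct (IH v (v n) Hv) as [dv [Hdv Hdvb]].
      destruct (classic (exists d, d > 0 /\ forall c, d <= vnorm (vsub x (lincomb (S n) c v)))) as [Hok|Hneg]; [exact Hok|].
      exfalso.
      assert (H' : forall k : nat, exists c, vnorm (vsub x (lincomb (S n) c v)) < / (INR k + 1)).
      { intros k. apply NNPP; intro Hn. apply Hneg. exists (/ (INR k + 1)). split.
        { apply Rinv_0_lt_compat; pose proof (pos_INR k); lra. }
        intro c. apply Rnot_lt_le; intro; apply Hn; exists c; auto. }
      set (ck := fun k => proj1_sig (constructive_indefinite_description _ (H' k))).
      assert (Hck : forall k, vnorm (vsub x (lincomb (S n) (ck k) v)) < / (INR k + 1)).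
      { intro k. unfold ck. destruct (constructive_indefinite_description _ (H' k)); auto. }
      assert (Hbd : forall k, Cmod (ck k n) <= (vnorm x + 1) / dv).
      { intro k. pose proof (key_bound n v dv Hdv Hdvb (ck k) (ck k n)) as K.
        pose proof (vnorm_le_sub (lincomb (S n) (ck k) v) x) as T.
        rewrite vnorm_sub_sym in T. specialize (Hck k). simpl in T, Hck.
        assert (/ (INR k + 1) <= 1).
        { rewrite <- Rinv_1. apply Rinv_le_contravar; [lra|]. pose proof (pos_INR k); lra. }
        apply Rmult_le_reg_r with dv; auto. unfold Rdiv. rewrite Rmult_assoc, Rinv_l by lra. lra. }
      destruct (BWC (fun k => ck k n) _ Hbd) as [phi [Hphi [lst Hlst]]].
      set (x' := vsub x (vscal lst (v n))).
      destruct (IH v x') as [d' [Hd' Hd'b]].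
      { intros [c Hc]. apply Hx. exists (fun i => if Nat.ltb i n then c i else lst).
        rewrite lincomb_S_last, <- Hc. unfold x'. rewrite vadd_comm. symmetry; apply vadd_sub. }
      pose proof (vnorm_ge0 (v n)) as Hw.
      destruct (Hlst (d' / (2 * (vnorm (v n) + 1)))) as [N1 HN1].
      { apply Rdiv_lt_0_compat; lra. }
      destruct (small_inv (d'/2) ltac:(lra)) as [N2 HN2].
      remember (max N1 N2) as k eqn:Hkk.
      specialize (HN1 k ltac:(lia)).
      specialize (HN2 (phi k) ltac:(pose proof (incr_ge phi Hphi k); lia)).
      specialize (Hck (phi k)). specialize (Hd'b (ck (phi k))).
      set (f := lincomb n (ck (phi k)) v) in *.
      set (lam := ck (phi k) n) in *.
      assert (E : vsub x' f = vadd (vsub x (lincomb (S n) (ck (phi k)) v)) (vscal (Cadd lam (Copp lst)) (v n))).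
      { simpl. fold f. fold lam. rewrite vscal_subs, <- vsub_sub, <- vsub_split.
        unfold x'. rewrite !vsub_sub, vadd_comm. reflexivity. }
      rewrite E in Hd'b. pose proof (vnorm_triangle _ (vsub x (lincomb (S n) (ck (phi k)) v)) (vscal (Cadd lam (Copp lst)) (v n))) as T.
      rewrite vnorm_scal in T.
      assert (Cmod (Cadd lam (Copp lst)) * vnorm (v n) <= d' / (2 * (vnorm (v n) + 1)) * vnorm (v n)).
      { apply Rmult_le_compat_r; auto. left; auto. }
      assert (d' / (2 * (vnorm (v n) + 1)) * vnorm (v n) < d' / 2).
      { unfold Rdiv. rewrite Rinv_mult. apply Rlt_le_trans with (d' * / 2 * (/ (vnorm (v n) + 1) * (vnorm (v n) + 1))).
        2:{ rewrite Rinv_l by lra. lra. }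
        assert (0 < / (vnorm (v n) + 1)) by (apply Rinv_0_lt_compat; lra).
        assert (0 < d' * /2) by lra. nra. }
      lra.
Qed.

End Closed.
Lemma riesz {X : CNormedSpace} n (v : nat -> X) : infinite_dimensional X ->
  exists u, vnorm u <= 1 /\ forall c, / 2 <= vnorm (vsub u (lincomb n c v)).
Proof.
  intro Hinf. destruct (Hinf n v) as [x Hx].
  destruct (dist_pos n v x Hx) as [d [Hd Hdb]].
  set (E := fun r => forall c, r <= vnorm (vsub x (lincomb n c v))).
  destruct (completeness E) as [D [HD1 HD2]].
  { exists (vnorm x). intros r Hr. specialize (Hr (fun _ => C0)).
    rewrite lincomb_zero, vsub_0 in Hr; auto. }
  { exists d. exact Hdb. }
  assert (HdD : d <= D) by (apply HD1; exact Hdb).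
  assert (HDl : forall c, D <= vnorm (vsub x (lincomb n c v))).
  { intro c. apply HD2. intros r Hr. apply Hr. }
  assert (Hc0 : exists c0, vnorm (vsub x (lincomb n c0 v)) < 2 * D).
  { apply NNPP; intro Hn. assert (E (2 * D)).
    { intro c. apply Rnot_lt_le. intro; apply Hn; exists c; auto. }
    specialize (HD1 _ H). lra. }
  destruct Hc0 as [c0 Hc0].
  set (t := vnorm (vsub x (lincomb n c0 v))) in *.
  assert (Ht : D <= t) by apply HDl.
  exists (vscal (mkC (/ t) 0) (vsub x (lincomb n c0 v))). split.
  { rewrite vnorm_scal, Cmod_real. fold t. rewrite Rabs_right by (left; apply Rinv_0_lt_compat; lra).
    right; field; lra. }
  intro c.
  assert (Eq : vsub (vscal (mkC (/ t) 0) (vsub x (lincomb n c0 v))) (lincomb n c v) =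
     vscal (mkC (/ t) 0) (vsub x (lincomb n (fun i => Cadd (c0 i) (Cmul (mkC t 0) (c i))) v))).
  { rewrite lincomb_add, <- lincomb_scal, <- vsub_sub, (vscal_sub _ (vsub _ _)), vscal_mul.
    replace (Cmul (mkC (/ t) 0) (mkC t 0)) with C1 by (apply CC_eq; simpl; field; lra).
    rewrite vscal_1. reflexivity. }
  rewrite Eq, vnorm_scal, Cmod_real, Rabs_right by (left; apply Rinv_0_lt_compat; lra).
  specialize (HDl (fun i => Cadd (c0 i) (Cmul (mkC t 0) (c i)))).
  apply Rle_trans with (/ t * D).
  - apply Rmult_le_reg_l with (2 * t); [lra|].
    replace (2 * t * (/ t * D)) with (2 * D) by (field; lra). lra.
  - apply Rmult_le_compat_l; auto. left; apply Rinv_0_lt_compat; lra.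
Qed.
Fixpoint pre {X : CNormedSpace} (Rf : (nat -> X) -> nat -> X) (k : nat) : nat -> X :=
  match k with
  | O => fun _ => vzero
  | S k' => fun i => if Nat.ltb i k' then pre Rf k' i else Rf (pre Rf k') k'
  end.

Lemma pre_eq {X : CNormedSpace} (Rf : (nat -> X) -> nat -> X) k i : (i < k)%nat ->
  pre Rf k i = Rf (pre Rf i) i.
Proof.
  induction k; intro H; [lia|]. simpl. destruct (Nat.ltb_spec i k).
  - apply IHk; auto.
  - assert (i = k) by lia. subst. reflexivity.
Qed.

Lemma sep_seq {X : CNormedSpace} : infinite_dimensional X ->
  exists e : nat -> X, (forall k, vnorm (e k) <= 1) /\
    forall j k, (j < k)%nat -> / 2 <= vnorm (vsub (e k) (e j)).
Proof.
  intro Hinf.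
  set (Rf := fun (v : nat -> X) n => proj1_sig (constructive_indefinite_description _ (riesz n v Hinf))).
  assert (HR : forall v n, vnorm (Rf v n) <= 1 /\ forall c, / 2 <= vnorm (vsub (Rf v n) (lincomb n c v))).
  { intros v n. unfold Rf. destruct (constructive_indefinite_description _ (riesz n v Hinf)); auto. }
  exists (fun k => Rf (pre Rf k) k). split.
  { intro k; apply HR. }
  intros j k Hjk. destruct (HR (pre Rf k) k) as [_ H].
  specialize (H (fun i => if Nat.eqb i j then C1 else C0)).
  rewrite lincomb_delta, pre_eq in H by auto. exact H.
Qed.
Lemma Cadd_sub_cancel2 z w : Cadd z (Cadd w (Copp z)) = w.
Proof. destruct z, w; apply CC_eq; simpl; ring. Qed.

Lemma part2 (X : CNormedSpace) (Cop : X -> X) (Sg : CC -> X -> X) (x : X) :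
  infinite_dimensional X ->
  entire_C_regularized_group Cop Sg ->
  supercyclic Sg x ->
  (forall z : CC, Sg z x <> vzero) ->
  forall omega0 : CC,
     dense (fun y => exists alpha z, Cmod z > Cmod omega0 /\ y = vscal alpha (Sg z x)).
Proof.
  intros Hinf Hgrp Hsc Hnz omega0 y eps Heps.
  destruct Hgrp as [_ [_ [_ [_ Hent]]]].
  apply NNPP; intro Hno.
  destruct (sep_seq Hinf) as [e [He1 He2]].
  set (r := Cmod omega0).
  set (u := fun k => vadd y (vscal (mkC (eps/2) 0) (e k))).
  assert (Hu : forall k, exists p : CC * CC, Cmod (snd p) <= r /\
      vnorm (vsub (vscal (fst p) (Sg (snd p) x)) (u k)) < eps / 16).
  { intro k. destruct (Hsc (u k) (eps/16) ltac:(lra)) as [a [[al [z ->]] Ha]].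
    exists (al, z). simpl. split; auto.
    apply Rnot_lt_le. intro Hz. apply Hno. exists (vscal al (Sg z x)). split.
    { exists al, z. split; auto. }
    eapply Rle_lt_trans; [apply (vnorm_sub_tri _ (u k))|].
    unfold u at 2. rewrite vsub_add_r0, vnorm_scal, Cmod_real, Rabs_right by lra.
    specialize (He1 k). nra. }
  set (pk := fun k => proj1_sig (constructive_indefinite_description _ (Hu k))).
  assert (Hpk : forall k, Cmod (snd (pk k)) <= r /\
      vnorm (vsub (vscal (fst (pk k)) (Sg (snd (pk k)) x)) (u k)) < eps / 16).
  { intro k. unfold pk. destruct (constructive_indefinite_description _ (Hu k)); auto. }
  set (al := fun k => fst (pk k)). set (zk := fun k => snd (pk k)).
  set (p := fun k => vscal (al k) (Sg (zk k) x)).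
  assert (Hsep : forall j k, (j < k)%nat -> eps / 8 <= vnorm (vsub (p k) (p j))).
  { intros j k Hjk.
    assert (Huk : vnorm (vsub (u k) (u j)) = eps / 2 * vnorm (vsub (e k) (e j))).
    { unfold u. rewrite vsub_add_l, <- vscal_sub, vnorm_scal, Cmod_real, Rabs_right by lra. reflexivity. }
    specialize (He2 j k Hjk).
    pose proof (vnorm_sub_tri (u k) (p k) (u j)) as T1.
    pose proof (vnorm_sub_tri (p k) (p j) (u j)) as T2.
    assert (P1 : vnorm (vsub (p k) (u k)) < eps / 16) by exact (proj2 (Hpk k)).
    assert (P2 : vnorm (vsub (p j) (u j)) < eps / 16) by exact (proj2 (Hpk j)).
    rewrite vnorm_sub_sym in P1. nra. }
  assert (Hpb : forall k, vnorm (p k) <= vnorm y + eps).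
  { intro k. pose proof (vnorm_le_sub (p k) y) as T.
    pose proof (vnorm_sub_tri (p k) (u k) y) as T2.
    assert (P1 : vnorm (vsub (p k) (u k)) < eps / 16) by exact (proj2 (Hpk k)).
    unfold u at 2 in T2. rewrite vsub_add_r0, vnorm_scal, Cmod_real, Rabs_right in T2 by lra.
    specialize (He1 k). nra. }
  destruct (BWC zk r (fun k => proj1 (Hpk k))) as [phi [Hphi [zs Hzs]]].
  set (s := Sg zs x).
  assert (Hms : 0 < vnorm s).
  { destruct (vnorm_ge0 s) as [h|h]; auto. exfalso; apply (Hnz zs), vnorm_eq0; auto. }
  assert (Sconv : forall eta, eta > 0 -> exists N, forall k, (N <= k)%nat ->
      vnorm (vsub (Sg (zk (phi k)) x) s) < eta).
  { intros eta Heta. destruct (cont_of_entire _ (Hent x) zs eta Heta) as [rho [Hrho Hc]].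
    destruct (Hzs rho Hrho) as [N HN]. exists N. intros k Hk.
    specialize (Hc _ (HN k Hk)). rewrite Cadd_sub_cancel2 in Hc. exact Hc. }
  destruct (Sconv (vnorm s / 2) ltac:(lra)) as [N0 HN0].
  set (M := 2 * (vnorm y + eps) / vnorm s).
  assert (HM : forall k, Cmod (al (phi (N0 + k)%nat)) <= M).
  { intro k. specialize (HN0 (N0 + k)%nat ltac:(lia)).
    pose proof (vnorm_le_sub s (Sg (zk (phi (N0 + k)%nat)) x)) as T.
    rewrite vnorm_sub_sym in T.
    specialize (Hpb (phi (N0 + k)%nat)). unfold p in Hpb. rewrite vnorm_scal in Hpb.
    pose proof (Cmod_ge0 (al (phi (N0 + k)%nat))).
    unfold M. apply Rmult_le_reg_r with (vnorm s / 2); [lra|].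
    replace (2 * (vnorm y + eps) / vnorm s * (vnorm s / 2)) with (vnorm y + eps) by (field; lra).
    nra. }
  destruct (BWC _ M HM) as [psi [Hpsi [als Hals]]].
  set (idx := fun k => phi (N0 + psi k)%nat).
  assert (Hidx : incr idx).
  { intro k. unfold idx. apply incr_lt; auto. specialize (Hpsi k). lia. }
  assert (HMpos : 0 <= M).
  { eapply Rle_trans; [apply Cmod_ge0|apply (HM O)]. }
  destruct (Sconv (eps / (64 * (M + 1)))) as [N1 HN1].
  { apply Rdiv_lt_0_compat; lra. }
  destruct (Hals (eps / (64 * (vnorm s + 1)))) as [N2 HN2].
  { apply Rdiv_lt_0_compat; lra. }
  assert (Hconv : forall k, (N1 + N2 <= k)%nat -> vnorm (vsub (p (idx k)) (vscal als s)) < eps / 16).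
  { intros k Hk.
    specialize (HN1 (N0 + psi k)%nat ltac:(pose proof (incr_ge psi Hpsi k); lia)).
    specialize (HN2 k ltac:(lia)).
    specialize (HM (psi k)).
    unfold p, idx. rewrite (vsub_split _ (vscal (al (phi (N0 + psi k)%nat)) s)).
    rewrite <- vscal_sub, <- vscal_subs.
    eapply Rle_lt_trans; [apply vnorm_triangle|]. rewrite !vnorm_scal.
    set (A := al (phi (N0 + psi k)%nat)) in *.
    set (dS := vnorm (vsub (Sg (zk (phi (N0 + psi k)%nat)) x) s)) in *.
    pose proof (Cmod_ge0 A). pose proof (Cmod_ge0 (Cadd A (Copp als))).
    pose proof (vnorm_ge0 (vsub (Sg (zk (phi (N0 + psi k)%nat)) x) s)). fold dS in H1.
    assert (Cmod A * dS <= M * (eps / (64 * (M + 1)))) by (apply Rmult_le_compat; lra).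
    assert (Cmod (Cadd A (Copp als)) * vnorm s <= eps / (64 * (vnorm s + 1)) * vnorm s)
      by (apply Rmult_le_compat; lra).
    assert (M * (eps / (64 * (M + 1))) <= eps / 64).
    { unfold Rdiv. rewrite Rinv_mult. apply Rle_trans with (eps * / 64 * (M * / (M + 1))); [right; ring|].
      assert (M * / (M + 1) <= 1).
      { apply Rmult_le_reg_r with (M + 1); [lra|]. rewrite Rmult_assoc, Rinv_l by lra. lra. }
      assert (0 <= eps * / 64) by lra. nra. }
    assert (eps / (64 * (vnorm s + 1)) * vnorm s <= eps / 64).
    { unfold Rdiv. rewrite Rinv_mult. apply Rle_trans with (eps * / 64 * (vnorm s * / (vnorm s + 1))); [right; ring|].
      assert (vnorm s * / (vnorm s + 1) <= 1).
      { apply Rmult_le_reg_r with (vnorm s + 1); [lra|]. rewrite Rmult_assoc, Rinv_l by lra. lra. }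
      assert (0 <= eps * / 64) by lra. nra. }
    lra. }
  set (K := (N1 + N2)%nat).
  pose proof (Hconv K ltac:(unfold K; lia)) as C1'.
  pose proof (Hconv (K + 1)%nat ltac:(unfold K; lia)) as C2'.
  pose proof (Hsep (idx K) (idx (K + 1)%nat) ltac:(apply incr_lt; auto; lia)) as Hs.
  pose proof (vnorm_sub_tri (p (idx (K + 1)%nat)) (vscal als s) (p (idx K))) as T.
  rewrite (vnorm_sub_sym (vscal als s)) in T. lra.
Qed.

Theorem theorem4p3 (X : CNormedSpace) (Cop : X -> X) (S : CC -> X -> X) (x : X) :
  complete X ->
  infinite_dimensional X ->
  entire_C_regularized_group Cop S ->
  dense_range Cop ->
  supercyclic S x ->
  (forall z : CC, S z x <> vzero) /\
  (forall omega0 : CC,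
     dense (fun y => exists alpha z, Cmod z > Cmod omega0 /\ y = vscal alpha (S z x))).
Proof.
  intros _ Hinf Hg Hdr Hsc.
  pose proof (part1 X Cop S x Hinf Hg Hdr Hsc) as H1.
  split; [exact H1|]. exact (part2 X Cop S x Hinf Hg Hsc H1).
Qed.
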